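(* Let $A$ be a finite interval of integers and let $G$ be a signed digraph on $[n]$. If $G$ admits a nilpotent function over $A$, then for every initial strong component $I$ of $G$, the induced signed subgraph $G[I]$ admits a nilpotent function over $A$. Conversely, if every initial strong component $I$ of $G$ is such that $G[I]$ admits a nilpotent function over $A$, and moreover either $|A|\geq 3$, or $|A|=2$ and every unsigned arc of $G$ has both endpoints in the same initial strong component of $G$, then $G$ admits a nilpotent function over $A$.
   Context: A signed digraph is a digraph (loops allowed, no multiple arcs) in which each arc is labeled positive, negative, or null (unsigned). For a finite interval of integers $A$ and a finite vertex set $V$, a function over $A$ on $V$ is a map $f:A^V\to A^V$; $f^0=\mathrm{id}$, $f^k=f\circ f^{k-1}$. Its interaction graph $G(f)$ is the signed digraph on $V$ with an arc $(j,i)$ iff $f_i(a)\neq f_i(b)$ for some $a,b$ with $a_j<b_j$ and $a_\ell=b_\ell$ for $\ell\neq j$; such an arc is positive if $f_i(a)\leq f_i(b)$ for all such pairs, negative if $f_i(a)\geq f_i(b)$ for all such pairs, and null otherwise. A signed digraph $G$ admits $f$ if $G(f)=G$. $f$ is nilpotent if $f^k$ is constant for some $k$. A strong component of $G$ is a strongly connected component; it is initial if there is no arc $(u,v)$ of $G$ with $u\notin I$ and $v\in I$. $G[I]$ denotes the subgraph induced by $I$ (with inherited signs). *)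

(* Defs.v *)
From mathcomp Require Import all_boot.
Set Implicit Arguments. Unset Strict Implicit. Unset Printing Implicit Defensive.

Inductive sign := Pos | Neg | Null.

(* A signed digraph on a finite vertex set V: G u v = None means no arc (u,v);
   G u v = Some s means an arc (u,v) with sign s.  Loops allowed, no multiple
   arcs (automatically). *)
Definition sdigraph (V : finType) := V -> V -> option sign.

(* The finite interval of integers A with |A| = m is represented by 'I_m
   (order-isomorphic to any interval of m consecutive integers; all notions
   below only use the order on A). *)
Definition config (m : nat) (V : finType) := {ffun V -> 'I_m}.

Definition jpair (m : nat) (V : finType) (j : V) (a b : config m V) : bool :=
  (a j < b j) && [forall l, (l != j) ==> (a l == b l)].

Section Interaction.
Variables (m : nat) (V : finType) (f : config m V -> config m V).

Definition has_arc (j i : V) : bool :=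
  [exists a, exists b, jpair j a b && (f a i != f b i)].
Definition all_incr (j i : V) : bool :=
  [forall a, forall b, jpair j a b ==> (f a i <= f b i)].
Definition all_decr (j i : V) : bool :=
  [forall a, forall b, jpair j a b ==> (f b i <= f a i)].

Definition interaction_graph : sdigraph V := fun j i =>
  if ~~ has_arc j i then None
  else if all_incr j i then Some Pos
  else if all_decr j i then Some Neg
  else Some Null.

Definition nilpotent : Prop :=
  exists k : nat, forall x y : config m V, iter k f x = iter k f y.
End Interaction.

Definition admits (m : nat) (V : finType) (G : sdigraph V)
  (f : config m V -> config m V) : Prop :=
  forall u v, interaction_graph f u v = G u v.

Definition admits_nilpotent (m : nat) (V : finType) (G : sdigraph V) : Prop :=
  exists f : config m V -> config m V, admits G f /\ nilpotent f.

Definition adj (V : finType) (G : sdigraph V) : rel V := fun u v => isSome (G u v).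

Definition strong_component (V : finType) (G : sdigraph V) (I : {set V}) : Prop :=
  exists v, I = [set u | connect (adj G) v u && connect (adj G) u v].

Definition initial_strong_component (V : finType) (G : sdigraph V) (I : {set V}) : Prop :=
  strong_component G I /\ forall u v, adj G u v -> v \in I -> u \in I.

Definition induced (V : finType) (G : sdigraph V) (I : {set V}) :
  sdigraph {v : V | v \in I} := fun u w => G (val u) (val w).
Arguments induced {V} G I _ _.

(* Main.v *)
Require Import Defs.
From mathcomp Require Import all_boot.
From Stdlib Require Import Classical IndefiniteDescription.
Set Implicit Arguments. Unset Strict Implicit. Unset Printing Implicit Defensive.


Section Generic.
Variables (m : nat) (V : finType).
Implicit Types (x : config m V) (I : {set V}) (d : 'I_m) (f : config m V -> config m V) (i j : V).

Definition upd x (j : V) (a : 'I_m) : config m V :=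
  [ffun l => if l == j then a else x l].
Definition restrict (I : {set V}) x : config m {v | v \in I} :=
  [ffun u => x (val u)].
Definition ext (I : {set V}) (d : 'I_m) (y : config m {v | v \in I}) : config m V :=
  [ffun v => if (insub v : option {v | v \in I}) is Some u then y u else d].

Arguments restrict I x : clear implicits.
Arguments ext I d y : clear implicits.
Arguments upd x j a : clear implicits.

Lemma restrict_ext I d y : restrict I (ext I d y) = y.
Proof. by apply/ffunP => u; rewrite !ffunE valK. Qed.

Lemma ext_restrict_on I d x v : v \in I -> ext I d (restrict I x) v = x v.
Proof.
move=> vI; rewrite ffunE; case: insubP => [u _ <-|]; first by rewrite ffunE.
by rewrite vI.
Qed.

Lemma forall_imp_exists (T : finType) (p q : T -> T -> bool) :
  [forall a, forall b, p a b ==> q a b] = ~~ [exists a, exists b, p a b && ~~ q a b].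
Proof.
rewrite negb_exists; apply: eq_forallb => a; rewrite negb_exists.
by apply: eq_forallb => b; rewrite negb_and negbK implybE.
Qed.

Lemma all_incrE f j i : all_incr f j i =
  ~~ [exists a, exists b, jpair j a b && ~~ (f a i <= f b i)].
Proof. exact: forall_imp_exists. Qed.
Lemma all_decrE f j i : all_decr f j i =
  ~~ [exists a, exists b, jpair j a b && ~~ (f b i <= f a i)].
Proof. exact: forall_imp_exists. Qed.

Section Factor.
Variables (I : {set V}) (F : config m {v | v \in I} -> config m {v | v \in I}).
Variables (f : config m V -> config m V) (i' : {v | v \in I}).
Hypothesis Hf : forall x, f x (val i') = F (restrict I x) i'.

Lemma jpair_restrict (j' : {v | v \in I}) a b :
  jpair (val j') a b -> jpair j' (restrict I a) (restrict I b).
Proof.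
case/andP=> lt /forallP H; apply/andP; split; first by rewrite !ffunE.
apply/forallP => l; apply/implyP => ne; rewrite !ffunE.
by have := H (val l); rewrite (inj_eq val_inj) ne.
Qed.

Lemma jpair_ext (j' : {v | v \in I}) d a b :
  jpair j' a b -> jpair (val j') (ext I d a) (ext I d b).
Proof.
case/andP=> lt /forallP H; apply/andP; split; first by rewrite !ffunE valK.
apply/forallP => l; apply/implyP => ne; rewrite !ffunE.
case: insubP => [u _ ul|//].
by have := H u; rewrite -ul (inj_eq val_inj) in ne; rewrite ne.
Qed.

Lemma transfer (j' : {v | v \in I}) (Q : 'I_m -> 'I_m -> bool) :
  [exists a, exists b, jpair (val j') a b && Q (f a (val i')) (f b (val i'))] =
  [exists a, exists b, jpair j' a b && Q (F a i') (F b i')].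
Proof.
apply/existsP/existsP => [[a /existsP [b /andP [jp q]]]|[a /existsP [b /andP [jp q]]]].
  exists (restrict I a); apply/existsP; exists (restrict I b).
  by rewrite jpair_restrict //= -!Hf.
exists (ext I (a j') a); apply/existsP; exists (ext I (a j') b).
by rewrite jpair_ext //= !Hf !restrict_ext.
Qed.

Lemma factor_graph (j' : {v | v \in I}) :
  interaction_graph f (val j') (val i') = interaction_graph F j' i'.
Proof.
rewrite /interaction_graph /has_arc all_incrE all_decrE.
rewrite (transfer j' (fun u v => u != v)) (transfer j' (fun u v => ~~ (u <= v)))
   (transfer j' (fun u v => ~~ (v <= u))) /all_incr /all_decr !forall_imp_exists.
by [].
Qed.

Lemma factor_none j : j \notin I -> interaction_graph f j (val i') = None.
Proof.
move=> jI; rewrite /interaction_graph /has_arc.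
have -> : [exists a : config m V, exists b : config m V, jpair j a b && (f a (val i') != f b (val i'))] = false.
  apply/negbTE/negP => /existsP [a /existsP [b /andP [/andP [_ /forallP H] ne]]].
  move: ne; rewrite !Hf.
  have -> : restrict I a = restrict I b.
    apply/ffunP => u; rewrite !ffunE; apply/eqP.
    have := H (val u); case: eqP => [e|_ /eqP //]; by move: jI; rewrite -e (valP u).
  by rewrite eqxx.
by [].
Qed.
End Factor.

Lemma local f i (I : {set V}) :
  (forall j, j \notin I -> ~~ has_arc f j i) ->
  forall x y : config m V, (forall v, v \in I -> x v = y v) -> f x i = f y i.
Proof.
move=> H x y E.
suff: forall k x, (forall v, v \in I -> x v = y v) ->
   #|[set v | x v != y v]| <= k -> f x i = f y i by apply; [exact: E|exact: leqnn].
elim=> [|k IH] {E} x E.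
  rewrite leqn0 cards_eq0 => /eqP e; congr (f _ i); apply/ffunP => v.
  apply/eqP; apply/negPn/negP => ne; have : v \in [set v | x v != y v] by rewrite inE.
  by rewrite e in_set0.
have [e _|] := eqVneq [set v | x v != y v] set0.
  congr (f _ i); apply/ffunP => v.
  apply/eqP; apply/negPn/negP => ne; have : v \in [set v | x v != y v] by rewrite inE.
  by rewrite e in_set0.
case/set0Pn => j; rewrite inE => nej cardk.
have jI : j \notin I by apply/negP => jI; rewrite E // eqxx in nej.
pose z := upd x j (y j).
have Ez : forall v, v \in I -> z v = y v.
  by move=> v vI; rewrite ffunE; case: eqP => [->|]; [|rewrite E].
have -> : f x i = f z i.
  have := H j jI; rewrite /has_arc negb_exists => /forallP Ha.
  have jpz : forall a b, jpair j a b -> f a i = f b i.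
    by move=> a b jp; have := Ha a; rewrite negb_exists => /forallP /(_ b);
       rewrite jp /= negbK => /eqP.
  have eqo : forall l, l != j -> x l = z l by move=> l ne; rewrite ffunE (negbTE ne).
  have zj : z j = y j by rewrite ffunE eqxx.
  case: (ltngtP (x j) (y j)) => c.
  - apply: jpz; apply/andP; split; first by rewrite zj.
    by apply/forallP => l; apply/implyP => ne; rewrite eqo.
  - apply/esym; apply: jpz; apply/andP; split; first by rewrite zj.
    by apply/forallP => l; apply/implyP => ne; rewrite eqo.
  - by move: nej; rewrite (val_inj c) eqxx.
apply: IH => //.
have -> : [set v | z v != y v] = [set v | x v != y v] :\ j.
  apply/setP => v; rewrite !inE ffunE; case: (eqVneq v j) => [->|nvj]; by rewrite ?eqxx.
by move: cardk; rewrite (cardsD1 j) inE nej add1n ltnS.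
Qed.

End Generic.
Arguments restrict {m V} I x.
Arguments ext {m V} I d y.
Arguments upd {m V} x j a.

Lemma isc_mem (V : finType) (G : sdigraph V) I :
  initial_strong_component G I -> exists v, v \in I.
Proof. by case=> [[v ->] _]; exists v; rewrite inE connect0. Qed.

Lemma restrict_iter (m : nat) (V : finType) (I : {set V}) f F :
  (forall x, restrict I (f x) = F (restrict I x)) ->
  forall k (x : config m V), restrict I (iter k f x) = iter k F (restrict I x).
Proof. by move=> H; elim=> [|k IH] x //=; rewrite H IH. Qed.

Lemma forward (m : nat) (V : finType) (G : sdigraph V) :
  admits_nilpotent m G -> forall I, initial_strong_component G I ->
  admits_nilpotent m (induced G I).
Proof.
case=> f [adm [k nil]] I isc.
have [v0 v0I] := isc_mem isc.
pose u0 : {v | v \in I} := Sub v0 v0I.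
pose h := fun y : config m {v | v \in I} => restrict I (f (ext I (y u0) y)).
have noarc : forall i, i \in I -> forall j, j \notin I -> ~~ has_arc f j i.
  move=> i iI j jI; apply/negP => ha.
  have : adj G j i by rewrite /adj -adm /interaction_graph ha; case: ifP => //; case: ifP.
  by move/(isc.2 _ _)/(_ iI); rewrite (negbTE jI).
have Hf : forall x (i' : {v | v \in I}), f x (val i') = h (restrict I x) i'.
  move=> x i'; rewrite /h ffunE; apply: (local (noarc _ (valP i'))) => v vI.
  by rewrite ext_restrict_on // ffunE.
have Hr : forall x, restrict I (f x) = h (restrict I x).
  by move=> x; apply/ffunP => u; rewrite ffunE Hf.
exists h; split.
  move=> u w; rewrite /induced -adm; apply/esym; exact: (factor_graph (Hf^~ w)).
exists k => y1 y2.
rewrite -(restrict_ext (y1 u0) y1) -(restrict_ext (y2 u0) y2).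
by rewrite -!(restrict_iter Hr) (nil _ (ext I (y2 u0) y2)).
Qed.

Section Arc.
Variables (m' : nat) (V : finType).
Local Notation m := m'.+2.

Definition one : 'I_m := inord 1.
Definition bit (b : bool) : 'I_m := if b then one else ord0.
Definition tst (s : sign) (a : 'I_m) : bool :=
  match s with Pos => 0 < a | Neg => a == 0 :> nat | Null => a == 1 :> nat end.
Definition tv (s : sign) (b : bool) : 'I_m :=
  match s with Neg => if b then ord0 else one | _ => if b then one else ord0 end.

Lemma one_val : (one : nat) = 1. Proof. by rewrite /one inordK. Qed.
Lemma tst_tv s b : tst s (tv s b) = b.
Proof. by case: s; case: b; rewrite /tst /tv /= ?one_val. Qed.
Lemma bit_le b1 b2 : (bit b1 <= bit b2) = (b1 ==> b2).
Proof. by case: b1; case: b2; rewrite /bit /= ?one_val. Qed.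
Lemma bit_inj : injective bit.
Proof. by case; case => // /(congr1 val); rewrite /= one_val. Qed.

Lemma arc_sign (f : config m V -> config m V) i j s (P : bool -> config m V -> bool) :
  (s = Null -> 0 < m') ->
  (forall x, f x i = bit (P (tst s (x j)) x)) ->
  (forall b (x y : config m V), (forall l, l != j -> x l = y l) -> P b x = P b y) ->
  (forall x, P false x ==> P true x) ->
  (exists x0, forall b, P b x0 = b) ->
  interaction_graph f j i = Some s.
Proof.
move=> hnull Hf Hind Hmon [x0 Hx0].
have jp : forall (a b : 'I_m), a < b -> jpair j (upd x0 j a) (upd x0 j b).
  move=> a b ab; apply/andP; split; first by rewrite !ffunE eqxx.
  by apply/forallP => l; apply/implyP => ne; rewrite !ffunE (negbTE ne).
have fu : forall a : 'I_m, f (upd x0 j a) i = bit (tst s a).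
  move=> a; rewrite Hf ffunE eqxx -[in RHS](Hx0 (tst s a)); congr bit; apply: Hind => l ne.
  by rewrite ffunE (negbTE ne).
have o01 : (ord0 : 'I_m) < one by rewrite one_val.
have ha : has_arc f j i.
  apply/existsP; exists (upd x0 j ord0); apply/existsP; exists (upd x0 j one).
  rewrite jp //= !fu (inj_eq bit_inj).
  by case: s {hnull Hf fu} => //=; rewrite one_val.
have jpP : forall a b c, jpair j a b -> P c a = P c b.
  move=> a b c /andP [_ /forallP H]; apply: Hind => l ne; apply/eqP; have := H l; by rewrite ne.
have mono : forall a b, jpair j a b -> tst s (a j) ==> tst s (b j) -> f a i <= f b i.
  move=> a b jab ti; rewrite !Hf (jpP _ _ _ jab) bit_le.
  by case: (tst s (a j)) (tst s (b j)) ti => [] [] //= _; rewrite ?implybb ?Hmon.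
have anti : forall a b, jpair j a b -> tst s (b j) ==> tst s (a j) -> f b i <= f a i.
  move=> a b jab ti; rewrite !Hf (jpP _ _ _ jab) bit_le.
  by case: (tst s (a j)) (tst s (b j)) ti => [] [] //= _; rewrite ?implybb ?Hmon.
rewrite /interaction_graph ha /=.
move: hnull Hf fu mono anti; case: s => hnull Hf fu mono anti.
- have -> // : all_incr f j i.
  apply/forallP => a; apply/forallP => b; apply/implyP => jab; apply: mono => //.
  move: (jab) => /andP [lt _]; apply/implyP => _; exact: leq_ltn_trans (leq0n _) lt.
- have -> : all_incr f j i = false.
    apply/negbTE/negP => /forallP /(_ (upd x0 j ord0)) /forallP /(_ (upd x0 j one)).
    by rewrite jp //= !fu bit_le /= one_val.
  have -> // : all_decr f j i.
  apply/forallP => a; apply/forallP => b; apply/implyP => jab; apply: anti => //.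
  move: (jab) => /andP [lt _]; apply/implyP => /= /eqP b0; by rewrite b0 in lt.
- have m'0 := hnull erefl.
  pose two : 'I_m := inord 2.
  have two_val : (two : nat) = 2 by rewrite inordK.
  have -> : all_incr f j i = false.
    apply/negbTE/negP => /forallP /(_ (upd x0 j one)) /forallP /(_ (upd x0 j two)).
    by rewrite jp ?one_val ?two_val //= !fu bit_le /= one_val two_val.
  have -> // : all_decr f j i = false.
  apply/negbTE/negP => /forallP /(_ (upd x0 j ord0)) /forallP /(_ (upd x0 j one)).
  by rewrite jp //= !fu bit_le /= one_val.
Qed.
End Arc.
Arguments one {m'}.
Arguments bit {m'} b.
Arguments tst {m'} s a.
Arguments tv {m'} s b.

Section Graph.
Variables (V : finType) (G : sdigraph V).
Local Notation e := (adj G).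

Definition scomp (v : V) : {set V} := [set u | connect e v u && connect e u v].
Definition inU (v : V) : bool :=
  [forall a, forall b, e a b ==> (b \in scomp v) ==> (a \in scomp v)].

Lemma comp_refl v : v \in scomp v.
Proof. by rewrite inE connect0. Qed.

Lemma inU_isc v : inU v -> initial_strong_component G (scomp v).
Proof.
move=> /forallP H; split; first by exists v.
move=> a b ab bc; have := H a => /forallP /(_ b); by rewrite ab bc.
Qed.

Lemma isc_comp I v : initial_strong_component G I -> v \in I -> I = scomp v.
Proof.
case=> [[w ->] _]; rewrite inE => /andP [wv vw]; apply/setP => u; rewrite !inE.
apply/andP/andP => [[wu uw]|[vu uv]]; split.
- exact: connect_trans vw wu.
- exact: connect_trans uw wv.
- exact: connect_trans wv vu.
- exact: connect_trans uv vw.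
Qed.

Lemma isc_inU I v : initial_strong_component G I -> v \in I -> inU v.
Proof.
move=> isc vI; have E := isc_comp isc vI.
apply/forallP => a; apply/forallP => b; apply/implyP => ab; apply/implyP => bc.
by rewrite -E; apply: isc.2 ab _; rewrite E.
Qed.

Lemma comp_eq v u : u \in scomp v -> scomp u = scomp v.
Proof.
rewrite inE => /andP [vu uv]; apply/setP => w; rewrite !inE.
apply/andP/andP => [[uw wu]|[vw wv]]; split.
- exact: connect_trans vu uw.
- exact: connect_trans wu uv.
- exact: connect_trans uv vw.
- exact: connect_trans wv vu.
Qed.

Lemma reach v : exists2 u, inU u & connect e u v.
Proof.
pose R u := [set y | connect e y u].
case: (@arg_minnP _ v (fun u => connect e u v) (fun u => #|R u|)) => [|u uv Hmin].
  exact: connect0.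
exists u => //.
apply/forallP => a; apply/forallP => b; apply/implyP => ab; rewrite !inE.
apply/implyP => /andP [ub bu].
have au : connect e a u := connect_trans (connect1 ab) bu.
rewrite au andbT; apply/negPn/negP => nua.
have : #|R a| < #|R u|.
  apply: proper_card; apply/properP; split.
    by apply/subsetP => y; rewrite !inE => ya; exact: connect_trans ya au.
  by exists u; rewrite !inE ?connect0.
by rewrite ltnNge Hmin //; exact: connect_trans au uv.
Qed.

Fixpoint layer (k : nat) : {set V} :=
  if k is k'.+1 then layer k' :|: [set v | [exists u in layer k', e u v]]
  else [set u | inU u].

Lemma S_path p : forall u k, u \in layer k -> path e u p -> last u p \in layer (k + size p).
Proof.
elim: p => [|w p IH] u k uS /=; first by rewrite addn0.
case/andP => uw pw; rewrite addnS -addSn; apply: IH pw.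
by rewrite /= !inE; apply/orP; right; apply/existsP; exists u; rewrite uS.
Qed.

Lemma exS v : exists k, v \in layer k.
Proof.
have [u uU /connectP [p pp ->]] := reach v.
by exists (0 + size p); apply: S_path pp; rewrite inE.
Qed.

Definition rank v := ex_minn (exS v).

Lemma rank_spec v : v \in layer (rank v) /\ forall k, v \in layer k -> rank v <= k.
Proof. by rewrite /rank; case: ex_minnP. Qed.

Lemma rank0 v : (rank v == 0) = inU v.
Proof.
have [H1 H2] := rank_spec v; apply/eqP/idP => [r0|uv].
  by move: H1; rewrite r0 inE.
by apply/eqP; rewrite -leqn0; apply: H2; rewrite inE.
Qed.

Definition par v := odflt v [pick u | (u \in layer (rank v).-1) && e u v].

Lemma par_spec v : ~~ inU v -> e (par v) v /\ rank (par v) < rank v.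
Proof.
rewrite -rank0 => r0; have [H1 H2] := rank_spec v.
move: r0 H1 H2; rewrite /par; case: (rank v) => // r _ H1 H2 /=.
case: pickP => [u /andP [uS uv] | none] /=.
  by split => //; rewrite ltnS; exact: (rank_spec u).2.
exfalso; move: H1; rewrite /= inE => /orP [vS|].
  by have := H2 _ vS; rewrite ltnn.
rewrite inE => /existsP [u /andP [uS uv]]; by have := none u; rewrite uS uv.
Qed.

End Graph.
Unset Implicit Arguments.

Section Converse.
Variables (m' : nat) (V : finType) (G : sdigraph V).
Local Notation m := m'.+2.
Local Notation e := (adj G).
Hypothesis Hyp : forall I, initial_strong_component G I -> admits_nilpotent m (induced G I).
Implicit Types (I : {set V}).
Hypothesis Hnull : 0 < m' \/ forall u v, G u v = Some Null ->
  exists I, initial_strong_component G I /\ u \in I /\ v \in I.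

Definition Hspec I (hk : (config m {v | v \in I} -> config m {v | v \in I}) * nat) :=
  initial_strong_component G I ->
  admits (induced G I) hk.1 /\ forall x y, iter hk.2 hk.1 x = iter hk.2 hk.1 y.

Lemma exHK I : exists hk, Hspec I hk.
Proof.
case: (classic (initial_strong_component G I)) => [isc|nisc].
  by have [h [adm [k nil]]] := Hyp I isc; exists (h, k).
by exists (id, 0) => /nisc.
Qed.

Definition HK I := proj1_sig (constructive_indefinite_description _ (exHK I)).
Lemma HKspec I : Hspec I (HK I).
Proof. exact: proj2_sig (constructive_indefinite_description _ (exHK I)). Qed.
Definition Hh I := (HK I).1.
Definition Kk I := (HK I).2.

Definition y0 I : config m {v | v \in I} := [ffun => ord0].
Definition xstar v : 'I_m :=
  ext (scomp G v) ord0 (iter (Kk (scomp G v)) (Hh (scomp G v)) (y0 _)) v.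

Definition sg (k v : V) : sign := odflt Pos (G k v).

Fixpoint cf (k : nat) (v : V) : 'I_m :=
  if inU G v then xstar v else
  if k is k'.+1 then bit (tst (sg (par G v) v) (cf k' (par G v))) else ord0.

Definition c v := cf (rank G v) v.

Lemma cf_stable k1 : forall k2 v, rank G v <= k1 -> rank G v <= k2 -> cf k1 v = cf k2 v.
Proof.
elim: k1 => [|k1 IH] k2 v r1 r2.
  have : inU G v by rewrite -rank0 -leqn0.
  by case: k2 {r2} => [|k2] /= ->.
case: k2 r2 => [|k2] r2 /=.
  by have -> : inU G v by rewrite -rank0 -leqn0.
case: ifP => // nU; congr bit; congr tst.
have [_ lt] := par_spec (negbT nU).
apply: IH; rewrite -ltnS; exact: leq_trans lt _.
Qed.

Lemma c_spec v : ~~ inU G v -> c v = bit (tst (sg (par G v) v) (c (par G v))).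
Proof.
move=> nU; have [_ lt] := par_spec nU.
rewrite /c; move: lt; case E: (rank G v) => [|r] lt //=.
rewrite (negbTE nU); congr bit; congr tst; apply: cf_stable => //.
Qed.

Lemma c_U v : inU G v -> c v = xstar v.
Proof. by rewrite /c; case: (rank G v) => [|r] /= ->. Qed.

Definition eps v := tst (sg (par G v) v) (c (par G v)).
Definition N' v := [set k | e k v] :\ par G v.
Definition Pv (v : V) (x : config m V) : bool :=
  if eps v then tst (sg (par G v) v) (x (par G v)) || [exists k in N' v, tst (sg k v) (x k)]
  else tst (sg (par G v) v) (x (par G v)) && [forall k in N' v, tst (sg k v) (x k)].

Definition fc (x : config m V) : config m V :=
  [ffun i => if inU G i then ext (scomp G i) ord0 (Hh (scomp G i) (restrict (scomp G i) x)) i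
             else bit (Pv i x)].


Lemma fc_U v : inU G v -> forall (i' : {u | u \in scomp G v}) x,
  fc x (val i') = Hh (scomp G v) (restrict (scomp G v) x) i'.
Proof.
move=> Uv i' x; have iI := valP i'.
have Ui : inU G (val i') := isc_inU (inU_isc Uv) iI.
have E := comp_eq iI.
by rewrite ffunE Ui E ffunE valK.
Qed.

Lemma fc_nU v x : ~~ inU G v -> fc x v = bit (Pv v x).
Proof. by move=> nU; rewrite ffunE (negbTE nU). Qed.

Lemma Pv_tst v (x y : config m V) : ~~ inU G v ->
  (forall k, e k v -> tst (sg k v) (x k) = tst (sg k v) (y k)) -> Pv v x = Pv v y.
Proof.
move=> nU H; have [pv _] := par_spec nU.
rewrite /Pv (H _ pv).
have -> : [exists k in N' v, tst (sg k v) (x k)] = [exists k in N' v, tst (sg k v) (y k)].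
  apply: eq_existsb => k; case kN: (k \in N' v) => //=; apply: H.
  by move: kN; rewrite !inE => /andP [_].
have -> // : [forall k in N' v, tst (sg k v) (x k)] = [forall k in N' v, tst (sg k v) (y k)].
apply: eq_forallb => k; case kN: (k \in N' v) => //=; rewrite H //.
by move: kN; rewrite !inE => /andP [_].
Qed.

Lemma Pv_mono v (x y : config m V) : ~~ inU G v ->
  (forall k, e k v -> tst (sg k v) (x k) ==> tst (sg k v) (y k)) -> Pv v x ==> Pv v y.
Proof.
move=> nU H; have [pv _] := par_spec nU.
have kNe : forall k, k \in N' v -> e k v by move=> k; rewrite !inE => /andP [_].
rewrite /Pv; case: (eps v).
  apply/implyP => /orP [h|/existsP [k /andP [kN h]]]; apply/orP.
    by left; exact: (implyP (H _ pv)) h.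
  by right; apply/existsP; exists k; rewrite kN; exact: (implyP (H _ (kNe _ kN))) h.
apply/implyP => /andP [h /forallP h2]; apply/andP; split.
  exact: (implyP (H _ pv)) h.
apply/forallP => k; apply/implyP => kN; have := h2 k; rewrite kN /= => hk.
exact: (implyP (H _ (kNe _ kN))) hk.
Qed.

Lemma fc_admits : admits G fc.
Proof.
move=> u v.
case Uv: (inU G v).
  pose i' : {w | w \in scomp G v} := exist _ v (comp_refl G v).
  have Hf := fc_U v Uv i'.
  case uI: (u \in scomp G v).
    pose u' : {w | w \in scomp G v} := exist _ u uI.
    rewrite -[u]/(val u') -[v]/(val i') (factor_graph Hf u').
    by rewrite ((HKspec _ (inU_isc Uv)).1 u' i').
  rewrite -[v]/(val i') (factor_none Hf (negbT uI)).
  case E: (G u v) => [s|] //.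
  have a : adj G u v by rewrite /adj E.
  by have := (inU_isc Uv).2 u v a (comp_refl G v); rewrite uI.
have nU := negbT Uv; have [pv _] := par_spec nU.
case E: (G u v) => [s|].
  pose x0 : config m V := [ffun k => tv (sg k v) (~~ eps v)].
  apply: (@arc_sign m' V fc v u s (fun b x => Pv v (upd x u (tv s b)))).
  - move=> sN; case: Hnull => // H.
    have [I [isc [_ vI]]] := H u v (etrans E (congr1 Some sN)).
    by have := isc_inU isc vI; rewrite Uv.
  - move=> x; rewrite fc_nU //; congr bit; apply: Pv_tst => // k kv.
    rewrite ffunE; case: (eqVneq k u) => [->|] //.
    by rewrite /sg E /= tst_tv.
  - move=> b x y H; congr Pv; apply/ffunP => l; rewrite !ffunE.
    by case: (eqVneq l u) => // ne; apply: H.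
  - move=> x; apply: Pv_mono => // k kv; rewrite !ffunE.
    case: (eqVneq k u) => [->|_]; last by rewrite implybb.
    by rewrite /sg E /= !tst_tv.
  exists x0 => b.
  have Ht : forall k, tst (sg k v) (upd x0 u (tv s b) k) = if k == u then b else ~~ eps v.
    move=> k; rewrite !ffunE; case: (eqVneq k u) => [->|_]; last by rewrite tst_tv.
    by rewrite /sg E /= tst_tv.
  rewrite /Pv Ht.
  have -> : [exists k in N' v, tst (sg k v) (upd x0 u (tv s b) k)] =
            [exists k in N' v, if k == u then b else ~~ eps v].
    by apply: eq_existsb => k; rewrite Ht.
  have -> : [forall k in N' v, tst (sg k v) (upd x0 u (tv s b) k)] =
            [forall k in N' v, if k == u then b else ~~ eps v].
    by apply: eq_forallb => k; rewrite Ht.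
  case: (eqVneq (par G v) u) => [pu|pu].
    have kN : forall k, k \in N' v -> k == u = false.
      by move=> k; rewrite !inE -pu => /andP [/negbTE].
    case: (eps v).
      have -> : [exists k in N' v, if k == u then b else ~~ true] = false.
        by apply/negbTE/existsP => [[k /andP [kN']]]; rewrite (kN _ kN').
      by rewrite orbF.
    have -> : [forall k in N' v, if k == u then b else ~~ false] = true.
      by apply/forallP => k; apply/implyP => kN'; rewrite (kN _ kN').
    by rewrite andbT.
  have uN : u \in N' v by rewrite !inE eq_sym pu /adj E.
  case: (eps v) => /=.
    apply/existsP/idP => [[k /andP [kN]]|bb].
      by case: (eqVneq k u).
    by exists u; rewrite uN eqxx.
  apply/forallP/idP => [/(_ u)|bb]; first by rewrite uN eqxx.
  by move=> k; apply/implyP => _; case: (eqVneq k u).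
rewrite /interaction_graph.
have -> // : has_arc fc u v = false.
apply/negbTE/existsP => [[a /existsP [b /andP [/andP [_ /forallP H] ne]]]].
move: ne; rewrite !fc_nU // (@Pv_tst v a b) ?eqxx //.
move=> k kv; have := H k; case: (eqVneq k u) => [ku|_ /eqP -> //].
by move: kv; rewrite ku /adj E.
Qed.

Definition Kmax := \max_(v : V) Kk (scomp G v).

Lemma fc_restrict v : inU G v -> forall x,
  restrict (scomp G v) (fc x) = Hh (scomp G v) (restrict (scomp G v) x).
Proof. by move=> Uv x; apply/ffunP => i'; rewrite ffunE fc_U. Qed.

Lemma conv_U v : inU G v -> forall t x, Kmax <= t -> iter t fc x v = xstar v.
Proof.
move=> Uv t x Kt.
rewrite -(ext_restrict_on ord0 (iter t fc x) (comp_refl G v)) (restrict_iter (fc_restrict v Uv)).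
rewrite /xstar; congr (ext _ _ _ v).
have kt : Kk (scomp G v) <= t := leq_trans (@leq_bigmax _ (fun w => Kk (scomp G w)) v) Kt.
rewrite -(subnKC kt) iterD; exact: (HKspec _ (inU_isc Uv)).2.
Qed.

Lemma conv r : forall v, rank G v <= r -> forall t x, Kmax + rank G v <= t ->
  iter t fc x v = c v.
Proof.
elim: r => [|r IH] v rv t x Kt.
  have Uv : inU G v by rewrite -rank0 -leqn0.
  by rewrite c_U // conv_U //; exact: leq_trans (leq_addr _ _) Kt.
case Uv: (inU G v).
  by rewrite c_U // conv_U //; exact: leq_trans (leq_addr _ _) Kt.
have nU := negbT Uv; have [pv lt] := par_spec nU.
case: t Kt => [|t] Kt.
  by move: Kt; rewrite leqn0 addn_eq0 => /andP [_]; rewrite rank0 Uv.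
rewrite iterS fc_nU // c_spec //; congr bit.
rewrite /Pv (IH (par G v)) //; first by rewrite /eps; case: (tst _ _).
- by rewrite -ltnS; exact: leq_trans lt rv.
- by rewrite -ltnS -addnS; apply: leq_trans Kt; rewrite leq_add2l.
Qed.

Lemma converse : admits_nilpotent m G.
Proof.
exists fc; split; first exact: fc_admits.
exists (Kmax + \max_(v : V) rank G v) => x y; apply/ffunP => v.
rewrite !(conv _ _ (leqnn (rank G v))) // leq_add2l; exact: leq_bigmax.
Qed.

End Converse.

Theorem proposition3 (m n : nat) (G : sdigraph 'I_n) :
  (admits_nilpotent m G ->
     forall I : {set 'I_n}, initial_strong_component G I ->
       admits_nilpotent m (induced G I)) /\
  ((forall I : {set 'I_n}, initial_strong_component G I ->
       admits_nilpotent m (induced G I)) ->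
   (3 <= m \/
    (m = 2 /\ forall u v : 'I_n, G u v = Some Null ->
       exists I : {set 'I_n}, initial_strong_component G I /\ u \in I /\ v \in I)) ->
   admits_nilpotent m G).
Proof.
split; first by move=> H I isc; exact: forward H I isc.
case: m => [|[|m']] Hyp Hm.
- by case: Hm => [//|[]].
- by case: Hm => [//|[]].
apply: (@converse m' _ G Hyp).
by case: Hm => [h|[_ h]]; [left | right].
Qed.
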